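(* In the setup described in the context, assume the Levi-Civita connection $\nabla$ of $g$ is locally flat, i.e. $R=0$. Then $(M,\tilde g,Q)$ is an almost Einstein manifold, and $$\tilde\rho(x,y)=\frac{3\tilde\tau^*+\tilde\tau}{8}\,g(x,y)+\frac{3\tilde\tau+\tilde\tau^*}{8}\,\tilde g(x,y).$$
   Context: Let $M$ be a 3-dimensional smooth manifold. Fix a coordinate chart $(x^1,x^2,x^3)$ with coordinate vector fields $\partial_i$. Structures: - $g$ is a Riemannian metric with $g(\partial_1,\partial_1)=g(\partial_2,\partial_2)=A$, $g(\partial_3,\partial_3)=B$ and $g(\partial_i,\partial_j)=0$ for $i\ne j$. Here $A,B$ are smooth positive functions. - $Q$ is the $(1,1)$-tensor field with $Q\partial_1=\partial_2$, $Q\partial_2=-\partial_1$, $Q\partial_3=\partial_3$. - $P=Q^2$ and $\tilde g(x,y)=g(x,Py)$. Connections and curvature: - $\nabla$ and $\tilde\nabla$ are the Levi-Civita connections of $g$ and $\tilde g$, with curvature tensors $R$ and $\tilde R$ defined by $R(x,y)z=\nabla_x\nabla_yz-\nabla_y\nabla_xz-\nabla_{[x,y]}z$ (analogously for $\tilde R$). - $\tilde R(x,y,z,t)=\tilde g(\tilde R(x,y)z,t)$. Ricci tensor and scalar quantities: - $\tilde\rho(y,z)=\tilde g^{ij}\tilde R(e_i,y,z,e_j)$. - $\tilde\tau=\tilde g^{ij}\tilde\rho(e_i,e_j)$ and $\tilde\tau^*=g^{ij}\tilde\rho(e_i,e_j)$. Definition. $(M,\tilde g,Q)$ is almost Einstein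 if $\tilde\rho=\alpha g+\beta\tilde g$ for smooth functions $\alpha,\beta$. *)

(* Defs.v *)
(* local coordinate computation on an open set U of R^3. *)
From HB Require Import structures.
From mathcomp Require Import all_boot all_order all_algebra.
From mathcomp Require Import all_classical all_reals all_analysis.
Set Implicit Arguments. Unset Strict Implicit. Unset Printing Implicit Defensive.
Import Order.TTheory GRing.Theory Num.Theory.
Import numFieldNormedType.Exports.
Local Open Scope classical_set_scope.
Local Open Scope ring_scope.

Section Coord.
Variable R : realType.

Definition pt := 'rV[R]_3.

Definition ebase (i : 'I_3) : pt := delta_mx 0 i.

Definition pd (i : 'I_3) (f : pt -> R) : pt -> R := fun x => derive f x (ebase i).

Definition iterpd (l : seq 'I_3) (f : pt -> R) : pt -> R := foldr pd f l.

Definition smooth_on (U : set pt) (f : pt -> R) : Prop :=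
  forall (l : seq 'I_3) (x : pt), U x -> differentiable (iterpd l f) x.

Definition tensor2 := 'I_3 -> 'I_3 -> pt -> R.

Definition mat_at (g : tensor2) (x : pt) : 'M[R]_3 := \matrix_(i, j) g i j x.
Definition inv_at (g : tensor2) (x : pt) : 'M[R]_3 := invmx (mat_at g x).

Definition christoffel (g : tensor2) (k i j : 'I_3) (x : pt) : R :=
  2^-1 * \sum_(l < 3) inv_at g x k l *
     (pd i (g j l) x + pd j (g i l) x - pd l (g i j) x).

(* R^l_{ijk}: coefficient of d_l in R(d_i,d_j)d_k
   = nabla_i nabla_j d_k - nabla_j nabla_i d_k  (coordinate fields commute) *)
Definition riem (g : tensor2) (i j k l : 'I_3) (x : pt) : R :=
  pd i (christoffel g l j k) x - pd j (christoffel g l i k) x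
  + \sum_(m < 3) (christoffel g m j k x * christoffel g l i m x
                  - christoffel g m i k x * christoffel g l j m x).

Definition riem4 (g : tensor2) (i j k t : 'I_3) (x : pt) : R :=
  \sum_(l < 3) riem g i j k l x * g l t x.

Definition ricci (g : tensor2) (a b : 'I_3) (x : pt) : R :=
  \sum_(i < 3) \sum_(j < 3) inv_at g x i j * riem4 g i a b j x.

Definition trace_wrt (h T : tensor2) (x : pt) : R :=
  \sum_(i < 3) \sum_(j < 3) inv_at h x i j * T i j x.

Definition gmet (A B : pt -> R) : tensor2 := fun i j x =>
  if i == j then (if i == 2%:R :> 'I_3 then B x else A x) else 0.

(* the (1,1)-tensor Q as a matrix: column j holds the components of Q d_j *)
Definition Qmat : 'M[R]_3 := \matrix_(k, j)
  (if (j == 0) && (k == 1) then 1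
   else if (j == 1) && (k == 0) then -1
   else if (j == 2%:R) && (k == 2%:R) then 1 else 0 : R).

Definition Pmat : 'M[R]_3 := Qmat *m Qmat.

Definition assoc_metric (g : tensor2) : tensor2 := fun i j x =>
  \sum_(k < 3) g i k x * Pmat k j.

Definition almost_Einstein (U : set pt) (g : tensor2) : Prop :=
  exists alpha beta : pt -> R, smooth_on U alpha /\ smooth_on U beta /\
    forall x, U x -> forall a b : 'I_3,
      ricci (assoc_metric g) a b x
      = alpha x * g a b x + beta x * assoc_metric g a b x.

End Coord.

(* Main.v *)
Require Import Defs.
From HB Require Import structures.
From mathcomp Require Import all_boot all_order all_algebra.
From mathcomp Require Import all_classical all_reals all_analysis.
From mathcomp Require Import ring lra.
Import Order.TTheory GRing.Theory Num.Theory.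
Import numFieldNormedType.Exports.
Local Open Scope classical_set_scope.
Local Open Scope ring_scope.
Set Warnings "-all".
Section Gen.
Variable R : realType.
Local Notation P := (pt R).

Lemma deriveN_any (f : P -> R) x v : 'D_v (- f) x = - 'D_v f x.
Proof.
case: (pselect (derivable f x v)) => df; first exact: deriveN.
have dnf : ~ derivable (- f) x v by move=> /derivableN; rewrite opprK.
by rewrite /derive dvgP // dvgP // oppr0.
Qed.

Lemma diff_vanish (e : P -> R) x :
  (\forall z \near x, e z = 0) -> differentiable e x.
Proof.
move=> ez.
have ex0 : e x = 0 by apply: (nbhs_singleton ez).
have H : e \o shift x = cst (e x) + \0 +o_ 0 id.
  apply/eqaddoP => eps eps0.
  have : \forall z \near (0 : P), e (z + x) = 0.
    move: ez; rewrite (near_shift 0) /=.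
    apply: filterS => z; rewrite /= subr0 addrC. done.
  apply: filterS => z /= Hz.
  by rewrite !fctE /= Hz ex0 addr0 subr0 normr0 mulr_ge0 // ltW.
have d0 : 'd e x = 0 :> (P -> R).
  by apply/diff_unique => //; exact: cst_continuous.
by apply/diff_locallyP; rewrite d0; split => //; exact: cst_continuous.
Qed.

Lemma near_eq_diff (f h : P -> R) x :
  (\forall z \near x, f z = h z) -> differentiable f x -> differentiable h x.
Proof.
move=> fh df.
have -> : h = f + (h - f) by apply/funext => z; rewrite !fctE addrC subrK.
apply: differentiableD => //; apply: diff_vanish.
by apply: filterS fh => z fz; rewrite !fctE fz subrr.
Qed.

Variable U : set P.
Hypothesis oU : open U.

Lemma near_U x : U x -> \forall z \near x, U z.
Proof. by move=> Ux; move: oU; rewrite openE => /(_ x Ux). Qed.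

Definition Sn n (f : P -> R) := forall l : seq 'I_3, (size l <= n)%N ->
  forall y, U y -> differentiable (iterpd l f) y.
Definition Sm f := forall n, Sn n f.

Lemma Sm_smooth f : Sm f <-> smooth_on U f.
Proof.
split => [Sf l y Uy|Sf n l _ y Uy]; last exact: Sf.
exact: (Sf (size l) l (leqnn _)).
Qed.

Lemma Sn_le m n f : (m <= n)%N -> Sn n f -> Sn m f.
Proof. by move=> mn Sf l lm; apply: Sf; apply: leq_trans mn. Qed.

Lemma loc_iterpd f h : (forall y, U y -> f y = h y) ->
  forall l y, U y -> iterpd l f y = iterpd l h y.
Proof.
move=> fh; elim=> [|i l IH] y Uy /=; first exact: fh.
rewrite /pd; apply: near_eq_derive; near=> z; apply: IH.
near: z; exact: near_U.
Unshelve. all: by end_near. Qed.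

Lemma Sn_loc n f h : (forall y, U y -> f y = h y) -> Sn n f -> Sn n h.
Proof.
move=> fh Sf l Hl y Uy; apply: near_eq_diff (Sf l Hl y Uy).
near=> z; apply: loc_iterpd => //; near: z; exact: near_U.
Unshelve. all: by end_near. Qed.

Lemma Sm_loc f h : (forall y, U y -> f y = h y) -> Sm f -> Sm h.
Proof. by move=> fh Sf n; apply: Sn_loc fh (Sf n). Qed.

Lemma Sn_pd n i f : Sn n.+1 f -> Sn n (pd i f).
Proof.
move=> Sf l Hl y Uy.
have -> : iterpd l (pd i f) = iterpd (rcons l i) f by rewrite /iterpd foldr_rcons.
by apply: Sf => //; rewrite size_rcons.
Qed.

Lemma Sm_pd i f : Sm f -> Sm (pd i f).
Proof. by move=> Sf n; apply: Sn_pd. Qed.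

Lemma Sn_add n f h : Sn n f -> Sn n h -> Sn n (fun y => f y + h y).
Proof.
move=> Sf Sh.
have E : forall l, (size l <= n)%N -> forall y, U y ->
    iterpd l (fun y => f y + h y) y = iterpd l f y + iterpd l h y.
  elim=> [|i l IH] Hl y Uy //=.
  rewrite /pd (near_eq_derive (g := iterpd l f + iterpd l h)).
    rewrite deriveD //; apply: diff_derivable.
      by apply: Sf => //; apply: ltnW.
    by apply: Sh => //; apply: ltnW.
  near=> z; rewrite IH //; [exact: ltnW|near: z; exact: near_U].
move=> l Hl y Uy.
apply: (@near_eq_diff (iterpd l f + iterpd l h)).
  by near=> z; rewrite E //; near: z; exact: near_U.
by apply: differentiableD; [apply: Sf | apply: Sh].
Unshelve. all: by end_near. Qed.

Lemma iterpd_cst (c : R) l : exists c', iterpd l (fun _ : P => c) = (fun _ => c').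
Proof.
elim: l => [|i l [c' IH]] /=; first by exists c.
exists 0; rewrite IH; apply/funext => y; exact: derive_cst.
Qed.

Lemma Sn_cst n (c : R) : Sn n (fun _ => c).
Proof.
move=> l _ y _; have [c' ->] := iterpd_cst c l; exact: differentiable_cst.
Qed.

Lemma Sn_mul n : forall f h, Sn n f -> Sn n h -> Sn n (fun y => f y * h y).
Proof.
elim: n => [|n IH] f h Sf Sh l Hl y Uy.
  case: l Hl => // _ /=; apply: differentiableM.
    exact: (Sf [::]).
  exact: (Sh [::]).
case/lastP: l Hl => [|l i] Hl.
  apply: differentiableM; [exact: (Sf [::]) | exact: (Sh [::])].
rewrite size_rcons ltnS in Hl.
have -> : iterpd (rcons l i) (fun y => f y * h y) = iterpd l (pd i (fun y => f y * h y)).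
  by rewrite /iterpd foldr_rcons.
have Sn1 : Sn n (pd i (fun y => f y * h y)).
  apply: (@Sn_loc _ (fun y => pd i f y * h y + f y * pd i h y)).
    move=> z Uz; rewrite /pd.
    have -> : (fun y => f y * h y) = (f * h)%R by [].
    rewrite deriveM; first by rewrite /= addrC; congr (_ + _); apply: mulrC.
      by apply: diff_derivable; exact: (Sf [::]).
    by apply: diff_derivable; exact: (Sh [::]).
  apply: Sn_add; apply: IH.
  - exact: Sn_pd.
  - exact: Sn_le Sh.
  - exact: Sn_le Sf.
  - exact: Sn_pd.
exact: Sn1.
Qed.

Lemma Sm_mul f h : Sm f -> Sm h -> Sm (fun y => f y * h y).
Proof. by move=> Sf Sh n; apply: Sn_mul. Qed.
Lemma Sm_add f h : Sm f -> Sm h -> Sm (fun y => f y + h y).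
Proof. by move=> Sf Sh n; apply: Sn_add. Qed.
Lemma Sm_cst c : Sm (fun _ => c).
Proof. by move=> n; apply: Sn_cst. Qed.
Lemma Sm_opp f : Sm f -> Sm (fun y => - f y).
Proof.
move=> Sf; apply: (@Sm_loc (fun y => (-1) * f y)).
  by move=> y _; rewrite mulN1r.
exact: Sm_mul (Sm_cst _) Sf.
Qed.
Lemma Sm_sub f h : Sm f -> Sm h -> Sm (fun y => f y - h y).
Proof. by move=> Sf Sh; apply: (@Sm_add f (fun y => - h y)) => //; apply: Sm_opp. Qed.

Lemma Sm_inv f : (forall y, U y -> f y != 0) -> Sm f -> Sm (fun y => (f y)^-1).
Proof.
move=> f0 Sf n; elim: n => [|n IH] l Hl y Uy.
  case: l Hl => // _ /=; apply: differentiableV; last exact: f0.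
  exact: (Sf 0%N [::]).
case/lastP: l Hl => [|l i] Hl.
  by apply: differentiableV; [exact: (Sf 0%N [::]) | exact: f0].
rewrite size_rcons ltnS in Hl.
have -> : iterpd (rcons l i) (fun y => (f y)^-1) = iterpd l (pd i (fun y => (f y)^-1)).
  by rewrite /iterpd foldr_rcons.
have Sn1 : Sn n (pd i (fun y => (f y)^-1)).
  apply: (@Sn_loc _ (fun y => ((-1) * ((f y)^-1 * (f y)^-1)) * pd i f y)).
    move=> z Uz; rewrite /pd deriveV; first by rewrite /= expr2 invfM mulN1r.
      exact: f0.
    by apply: diff_derivable; exact: (Sf 0%N [::]).
  apply: Sn_mul; last exact: Sn_pd.
  apply: Sn_mul; first exact: Sn_cst.
  exact: Sn_mul.
exact: Sn1.
Qed.

Lemma Sm_sum3 (F : 'I_3 -> P -> R) : (forall m, Sm (F m)) ->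
  Sm (fun y => \sum_(m < 3) F m y).
Proof.
move=> SF; apply: (@Sm_loc (fun y => F ord0 y + F (lift ord0 ord0) y
   + F (lift ord0 (lift ord0 ord0)) y)).
  move=> y _; rewrite !big_ord_recl big_ord0 addr0 addrA.
  by congr (_ + _ + _); apply: congr1; apply: val_inj.
by apply: Sm_add; [apply: Sm_add|].
Qed.

End Gen.
Section Geo.
Variable R : realType.
Local Notation P := (pt R).

Definition i0 : 'I_3 := @Ordinal 3 0 isT.
Definition i1 : 'I_3 := @Ordinal 3 1 isT.
Definition i2 : 'I_3 := @Ordinal 3 2 isT.

Lemma ord3 (a : 'I_3) : a = i0 \/ a = i1 \/ a = i2.
Proof.
case: a => [[|[|[|k]]] Hk]; [left|right;left|right;right|by []];
  by apply: val_inj.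
Qed.

Lemma sum3 (F : 'I_3 -> R) : \sum_(m < 3) F m = F i0 + F i1 + F i2.
Proof.
rewrite !big_ord_recl big_ord0 addr0 addrA.
by congr (_ + _ + _); apply: congr1; apply: val_inj.
Qed.

Definition eps (j : 'I_3) : R := if j == 2%:R then 1 else -1.
Lemma e0 : eps i0 = -1. Proof. by []. Qed.
Lemma e1 : eps i1 = -1. Proof. by []. Qed.
Lemma e2 : eps i2 = 1. Proof. by []. Qed.
Lemma eps2 j : eps j * eps j = 1.
Proof. by rewrite /eps; case: ifP => _; rewrite ?mulr1 ?mulrNN ?mulr1. Qed.
Lemma eps_pm j : eps j = 1 \/ eps j = -1.
Proof. by rewrite /eps; case: ifP => _; [left|right]. Qed.

Lemma Pmat_E k j : Pmat R k j = if k == j then eps j else 0.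
Proof.
rewrite /Pmat /eps mxE !big_ord_recr big_ord0 /= !mxE.
case: k => [[|[|[|k]]] Hk]; case: j => [[|[|[|j]]] Hj] //=;
 rewrite ?mul0r ?mulr0 ?add0r ?addr0 ?mulN1r ?mulr1 ?mul1r //.
Qed.

Variables A B : P -> R.
Local Notation gm := (gmet A B).
Local Notation gt := (assoc_metric (gmet A B)).

Lemma gm00 : gm i0 i0 = A. Proof. by apply/funext. Qed.
Lemma gm11 : gm i1 i1 = A. Proof. by apply/funext. Qed.
Lemma gm22 : gm i2 i2 = B. Proof. by apply/funext. Qed.
Lemma gm_off a b : a != b -> gm a b = fun _ => 0.
Proof. by move=> ab; apply/funext => y; rewrite /gmet (negbTE ab). Qed.

Lemma gt_pt a b y : gt a b y = eps b * gm a b y.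
Proof.
rewrite /assoc_metric (bigD1 b) //= Pmat_E eqxx big1 ?addr0; first exact: mulrC.
by move=> k kb; rewrite Pmat_E (negbTE kb) mulr0.
Qed.

Lemma pd_off i a b y : a != b -> pd i (gm a b) y = 0.
Proof. by move=> ab; rewrite gm_off // /pd; exact: derive_cst. Qed.

Lemma pd_gt i a b y : pd i (gt a b) y = eps b * pd i (gm a b) y.
Proof.
have E : gt a b = fun y => eps b * gm a b y by apply/funext => z; rewrite gt_pt.
rewrite E; case: (eps_pm b) => ->.
  by rewrite mul1r; congr pd; apply/funext => z; rewrite mul1r.
have -> : (fun y => -1 * gm a b y) = - gm a b by apply/funext => z; rewrite mulN1r.
by rewrite mulN1r /pd deriveN_any.
Qed.

Lemma invmx_left (M N : 'M[R]_3) : N *m M = 1%:M -> invmx M = N.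
Proof.
move=> NM; have [_ Mu] := mulmx1_unit NM.
by rewrite -[invmx M]mul1mx -NM -mulmxA mulmxV // mulmx1.
Qed.

Variable U : set P.
Hypothesis oU : open U.
Hypothesis HA : forall y, U y -> 0 < A y.
Hypothesis HB : forall y, U y -> 0 < B y.

Lemma A0 y : U y -> A y != 0. Proof. by move=> Uy; rewrite gt_eqF // HA. Qed.
Lemma B0 y : U y -> B y != 0. Proof. by move=> Uy; rewrite gt_eqF // HB. Qed.
Lemma gkk0 k y : U y -> gm k k y != 0.
Proof.
by move=> Uy; rewrite /gmet eqxx; case: ifP => _; [apply: B0|apply: A0].
Qed.

Lemma inv_gm y : U y ->
  inv_at gm y = \matrix_(i, j) (if i == j then (gm i i y)^-1 else 0).
Proof.
move=> Uy; apply: invmx_left; apply/matrixP => i j.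
have a0 := @A0 y Uy; have b0 := @B0 y Uy.
rewrite !mxE sum3 !mxE.
by case: (ord3 i) => [->|[->|->]]; case: (ord3 j) => [->|[->|->]];
  rewrite /gmet /= ?mulr0 ?mul0r ?addr0 ?add0r ?mulVf.
Qed.

Lemma inv_gt y : U y ->
  inv_at gt y = \matrix_(i, j) (if i == j then eps i * (gm i i y)^-1 else 0).
Proof.
move=> Uy; apply: invmx_left; apply/matrixP => i j.
have a0 := @A0 y Uy; have b0 := @B0 y Uy.
rewrite !mxE sum3 !mxE !gt_pt.
by case: (ord3 i) => [->|[->|->]]; case: (ord3 j) => [->|[->|->]];
  rewrite /gmet /= ?e0 ?e1 ?e2 ?mulr0 ?mul0r ?addr0 ?add0r //; field.
Qed.

Lemma chr_gm k i j y : U y -> christoffel gm k i j y =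
  2^-1 * ((gm k k y)^-1 * (pd i (gm j k) y + pd j (gm i k) y - pd k (gm i j) y)).
Proof.
move=> Uy; rewrite /christoffel (inv_gm y Uy) (bigD1 k) //= mxE eqxx big1 ?addr0 //.
by move=> l lk; rewrite mxE eq_sym (negbTE lk) mul0r.
Qed.

Lemma chr_gt0 k i j y : U y -> christoffel gt k i j y =
  2^-1 * (eps k * (gm k k y)^-1 *
    (eps k * pd i (gm j k) y + eps k * pd j (gm i k) y - eps j * pd k (gm i j) y)).
Proof.
move=> Uy; rewrite /christoffel (inv_gt y Uy) (bigD1 k) //= mxE eqxx big1 ?addr0.
  by rewrite !pd_gt.
by move=> l lk; rewrite mxE eq_sym (negbTE lk) mul0r.
Qed.

Definition sigma (k i j : 'I_3) : R := if i == j then eps k * eps j else 1.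

Lemma sig_pm k i j : sigma k i j = 1 \/ sigma k i j = -1.
Proof.
rewrite /sigma; case: ifP => _; last by left.
by case: (eps_pm k) => ->; case: (eps_pm j) => ->;
  rewrite ?mulr1 ?mul1r ?mulrNN ?mulr1; first [by left | by right].
Qed.

Lemma chr_gt_sig k i j y : U y ->
  christoffel gt k i j y = sigma k i j * christoffel gm k i j y.
Proof.
move=> Uy; rewrite (chr_gt0 k i j y Uy) (chr_gm k i j y Uy) /sigma.
have ek := eps2 k.
case: (eqVneq i j) => [<-|ij].
  case: (eqVneq k i) => [<-|ki].
    by ring.
  have ik : i != k by rewrite eq_sym.
  rewrite (pd_off i i k y ik); by ring.
rewrite (pd_off k i j y ij).
transitivity ((eps k * eps k) * (2^-1 * ((gm k k y)^-1 * (pd i (gm j k) y + pd j (gm i k) y - 0)))).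
  by ring.
by rewrite ek.
Qed.
Lemma pd_chr_gt m k i j x : U x ->
  pd m (christoffel gt k i j) x = sigma k i j * pd m (christoffel gm k i j) x.
Proof.
move=> Ux; rewrite /pd (@near_eq_derive _ _ _ _ (fun y => sigma k i j * christoffel gm k i j y)).
  case: (sig_pm k i j) => ->.
    by rewrite mul1r; congr derive; apply/funext => z; rewrite mul1r.
  have -> : (fun y => -1 * christoffel gm k i j y) = - christoffel gm k i j.
    by apply/funext => z; rewrite mulN1r.
  by rewrite deriveN_any mulN1r.
near=> z; apply: chr_gt_sig; near: z; exact: near_U.
Unshelve. all: by end_near. Qed.

Lemma chr_distinct k i j y : U y -> k != i -> k != j -> i != j ->
  christoffel gm k i j y = 0.
Proof.
move=> Uy ki kj ij; rewrite (chr_gm k i j y Uy).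
rewrite (pd_off k i j y ij) (pd_off i j k y) ?(pd_off j i k y) ?subr0 ?addr0 ?mulr0 //;
  by rewrite eq_sym.
Qed.

Lemma n01 : (i0 == i1) = false. Proof. by []. Qed.
Lemma n02 : (i0 == i2) = false. Proof. by []. Qed.
Lemma n10 : (i1 == i0) = false. Proof. by []. Qed.
Lemma n12 : (i1 == i2) = false. Proof. by []. Qed.
Lemma n20 : (i2 == i0) = false. Proof. by []. Qed.
Lemma n21 : (i2 == i1) = false. Proof. by []. Qed.
Lemma gp00 y : gm i0 i0 y = A y. Proof. by []. Qed.
Lemma gp11 y : gm i1 i1 y = A y. Proof. by []. Qed.
Lemma gp22 y : gm i2 i2 y = B y. Proof. by []. Qed.
Lemma gp01 y : gm i0 i1 y = 0. Proof. by []. Qed.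
Lemma gp02 y : gm i0 i2 y = 0. Proof. by []. Qed.
Lemma gp10 y : gm i1 i0 y = 0. Proof. by []. Qed.
Lemma gp12 y : gm i1 i2 y = 0. Proof. by []. Qed.
Lemma gp20 y : gm i2 i0 y = 0. Proof. by []. Qed.
Lemma gp21 y : gm i2 i1 y = 0. Proof. by []. Qed.
Definition simpE := (eqxx, n01, n02, n10, n12, n20, n21, gp00, gp11, gp22, gp01, gp02,
  gp10, gp12, gp20, gp21, e0, e1, e2).

Lemma ricci_gt a b x : U x -> ricci gt a b x = \sum_(i < 3) riem gt i a b i x.
Proof.
move=> Ux; have a0 := @A0 x Ux; have b0 := @B0 x Ux.
rewrite /ricci (inv_gt x Ux) /riem4 !sum3 !mxE !gt_pt !simpE.
move: (riem gt) => r; field; rewrite ?a0 ?b0 //=.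
Qed.

Lemma tr_gm T x : U x -> trace_wrt gm T x =
  T i0 i0 x / A x + T i1 i1 x / A x + T i2 i2 x / B x.
Proof.
move=> Ux; have a0 := @A0 x Ux; have b0 := @B0 x Ux.
rewrite /trace_wrt (inv_gm x Ux) !sum3 !mxE !simpE.
field; rewrite ?a0 ?b0 //=.
Qed.

Lemma tr_gt T x : U x -> trace_wrt gt T x =
  - (T i0 i0 x / A x) - T i1 i1 x / A x + T i2 i2 x / B x.
Proof.
move=> Ux; have a0 := @A0 x Ux; have b0 := @B0 x Ux.
rewrite /trace_wrt (inv_gt x Ux) !sum3 !mxE !simpE.
field; rewrite ?a0 ?b0 //=.
Qed.
Lemma c211 y : U y -> christoffel gm i2 i1 i1 y = christoffel gm i2 i0 i0 y.
Proof. by move=> Uy; rewrite !(chr_gm _ _ _ _ Uy) gm11 gm00 !pd_off. Qed.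
Lemma c112 y : U y -> christoffel gm i1 i1 i2 y = christoffel gm i0 i0 i2 y.
Proof. by move=> Uy; rewrite !(chr_gm _ _ _ _ Uy) gm11 gm00 !pd_off. Qed.
Lemma c121 y : U y -> christoffel gm i1 i2 i1 y = christoffel gm i0 i2 i0 y.
Proof. by move=> Uy; rewrite !(chr_gm _ _ _ _ Uy) gm11 gm00 !pd_off. Qed.
Lemma dc211 x : U x ->
  pd i2 (christoffel gm i2 i1 i1) x = pd i2 (christoffel gm i2 i0 i0) x.
Proof.
move=> Ux; rewrite /pd; apply: near_eq_derive; near=> z; apply: c211.
near: z; exact: near_U.
Unshelve. all: by end_near. Qed.

Lemma key_off a b x : U x -> a != b ->
  \sum_(i < 3) riem gt i a b i x = \sum_(i < 3) riem gm i a b i x.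
Proof.
move=> Ux ab.
have z012 := chr_distinct i0 i1 i2 x Ux isT isT isT.
have z021 := chr_distinct i0 i2 i1 x Ux isT isT isT.
have z102 := chr_distinct i1 i0 i2 x Ux isT isT isT.
have z120 := chr_distinct i1 i2 i0 x Ux isT isT isT.
have z201 := chr_distinct i2 i0 i1 x Ux isT isT isT.
have z210 := chr_distinct i2 i1 i0 x Ux isT isT isT.
rewrite !sum3 /riem !sum3 !(pd_chr_gt _ _ _ _ _ Ux) !(chr_gt_sig _ _ _ _ Ux) /sigma.
case: (ord3 a) ab => [->|[->|->]]; case: (ord3 b) => [->|[->|->]] // _;
  rewrite !simpE ?z012 ?z021 ?z102 ?z120 ?z201 ?z210;
  move: (christoffel gm) (@pd R) => c p; ring.
Qed.
Lemma key_diag x : U x ->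
  \sum_(i < 3) riem gt i i1 i1 i x - \sum_(i < 3) riem gm i i1 i1 i x =
  \sum_(i < 3) riem gt i i0 i0 i x - \sum_(i < 3) riem gm i i0 i0 i x.
Proof.
move=> Ux.
have z012 := chr_distinct i0 i1 i2 x Ux isT isT isT.
have z021 := chr_distinct i0 i2 i1 x Ux isT isT isT.
have z102 := chr_distinct i1 i0 i2 x Ux isT isT isT.
have z120 := chr_distinct i1 i2 i0 x Ux isT isT isT.
have z201 := chr_distinct i2 i0 i1 x Ux isT isT isT.
have z210 := chr_distinct i2 i1 i0 x Ux isT isT isT.
rewrite !sum3 /riem !sum3 !(pd_chr_gt _ _ _ _ _ Ux) !(chr_gt_sig _ _ _ _ Ux) /sigma.
rewrite !simpE ?z012 ?z021 ?z102 ?z120 ?z201 ?z210.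
rewrite (dc211 x Ux) (c211 x Ux) (c112 x Ux) (c121 x Ux).
move: (christoffel gm) (@pd R) => c p; ring.
Qed.
Hypothesis sA : smooth_on U A.
Hypothesis sB : smooth_on U B.

Lemma smM f h : Sm R U f -> Sm R U h -> Sm R U (fun y => f y * h y).
Proof. exact: (@Sm_mul R U oU f h). Qed.
Lemma smD f h : Sm R U f -> Sm R U h -> Sm R U (fun y => f y + h y).
Proof. exact: (@Sm_add R U oU f h). Qed.
Lemma smB f h : Sm R U f -> Sm R U h -> Sm R U (fun y => f y - h y).
Proof. exact: (@Sm_sub R U oU f h). Qed.
Lemma smC c : Sm R U (fun _ => c).
Proof. exact: (@Sm_cst R U c). Qed.
Lemma smP i f : Sm R U f -> Sm R U (pd i f).
Proof. exact: (@Sm_pd R U i f). Qed.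
Lemma smL f h : (forall y, U y -> f y = h y) -> Sm R U f -> Sm R U h.
Proof. exact: (@Sm_loc R U oU f h). Qed.
Lemma smI f : (forall y, U y -> f y != 0) -> Sm R U f -> Sm R U (fun y => (f y)^-1).
Proof. exact: (@Sm_inv R U oU f). Qed.
Lemma smS (F : 'I_3 -> P -> R) : (forall m, Sm R U (F m)) ->
  Sm R U (fun y => \sum_(m < 3) F m y).
Proof. exact: (@Sm_sum3 R U oU F). Qed.

Lemma sm_gm a b : Sm R U (gm a b).
Proof.
have SA := proj2 (Sm_smooth R U A) sA; have SB := proj2 (Sm_smooth R U B) sB.
rewrite /gmet; case: (a == b); last exact: smC.
by case: (a == 2%:R).
Qed.

Lemma sm_chr k i j : Sm R U (christoffel gm k i j).
Proof.
apply: (@smL (fun y => 2^-1 * ((gm k k y)^-1 *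
    (pd i (gm j k) y + pd j (gm i k) y - pd k (gm i j) y)))).
  by move=> y Uy; rewrite (chr_gm k i j y Uy).
apply: smM; first exact: smC.
apply: smM; first by apply: smI; [move=> y Uy; exact: gkk0 | exact: sm_gm].
by apply: smB; [apply: smD|]; apply: smP; apply: sm_gm.
Qed.

Lemma sm_chrt k i j : Sm R U (christoffel gt k i j).
Proof.
apply: (@smL (fun y => sigma k i j * christoffel gm k i j y)).
  by move=> y Uy; rewrite (chr_gt_sig k i j y Uy).
by apply: smM; [exact: smC | exact: sm_chr].
Qed.

Lemma sm_riemt i j k l : Sm R U (riem gt i j k l).
Proof.
apply: (@smL (fun y => pd i (christoffel gt l j k) y - pd j (christoffel gt l i k) y
  + \sum_(m < 3) (christoffel gt m j k y * christoffel gt l i m y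
                  - christoffel gt m i k y * christoffel gt l j m y))).
  by [].
apply: smD; first by apply: smB; apply: smP; apply: sm_chrt.
apply: smS => m.
by apply: smB; apply: smM; apply: sm_chrt.
Qed.

Lemma sm_ricci a b : Sm R U (ricci gt a b).
Proof.
apply: (@smL (fun y => \sum_(i < 3) riem gt i a b i y)).
  by move=> y Uy; rewrite (ricci_gt a b y Uy).
by apply: smS => i; apply: sm_riemt.
Qed.

Definition alp (y : P) := (ricci gt i0 i0 y / A y + ricci gt i2 i2 y / B y) / 2.
Definition bet (y : P) := (ricci gt i2 i2 y / B y - ricci gt i0 i0 y / A y) / 2.

Lemma sm_alp : smooth_on U alp.
Proof.
apply/Sm_smooth; rewrite /alp.
have iA : Sm R U (fun y => (A y)^-1).
  apply: smI; [exact: A0 | exact: (proj2 (Sm_smooth R U A) sA)].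
have iB : Sm R U (fun y => (B y)^-1).
  apply: smI; [exact: B0 | exact: (proj2 (Sm_smooth R U B) sB)].
apply: smM; last exact: smC.
by apply: smD; apply: smM => //; apply: sm_ricci.
Qed.

Lemma sm_bet : smooth_on U bet.
Proof.
apply/Sm_smooth; rewrite /bet.
have iA : Sm R U (fun y => (A y)^-1).
  apply: smI; [exact: A0 | exact: (proj2 (Sm_smooth R U A) sA)].
have iB : Sm R U (fun y => (B y)^-1).
  apply: smI; [exact: B0 | exact: (proj2 (Sm_smooth R U B) sB)].
apply: smM; last exact: smC.
by apply: smB; apply: smM => //; apply: sm_ricci.
Qed.
Lemma rho_off a b x : U x -> (forall i j k l, riem gm i j k l x = 0) -> a != b ->
  ricci gt a b x = 0.
Proof.
move=> Ux Hx ab; rewrite (ricci_gt a b x Ux) (key_off a b x Ux ab).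
by rewrite sum3 !Hx !addr0.
Qed.

Lemma aux3 (s1 z1 s0 z0 : R) : s1 - z1 = s0 - z0 -> z1 = 0 -> z0 = 0 -> s1 = s0.
Proof. by move=> K E1 E0; rewrite E1 E0 !subr0 in K. Qed.

Lemma rho_11 x : U x -> (forall i j k l, riem gm i j k l x = 0) ->
  ricci gt i1 i1 x = ricci gt i0 i0 x.
Proof.
move=> Ux Hx; have := key_diag x Ux.
have Z : forall a b, \sum_(i < 3) riem gm i a b i x = 0.
  by move=> a b; rewrite sum3 !Hx !addr0.
move=> K; rewrite (ricci_gt i1 i1 x Ux) (ricci_gt i0 i0 x Ux).
apply: (aux3 _ _ _ _ K); by rewrite sum3 !Hx !addr0.
Qed.

Lemma rho_form a b x : U x -> (forall i j k l, riem gm i j k l x = 0) ->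
  ricci gt a b x = alp x * gm a b x + bet x * gt a b x.
Proof.
move=> Ux Hx; have a0 := @A0 x Ux; have b0 := @B0 x Ux.
rewrite gt_pt /alp /bet.
case: (ord3 a) => [->|[->|->]]; case: (ord3 b) => [->|[->|->]];
  rewrite ?(rho_off i0 i1 x Ux Hx isT) ?(rho_off i0 i2 x Ux Hx isT)
    ?(rho_off i1 i0 x Ux Hx isT) ?(rho_off i1 i2 x Ux Hx isT)
    ?(rho_off i2 i0 x Ux Hx isT) ?(rho_off i2 i1 x Ux Hx isT)
    ?(rho_11 x Ux Hx) !simpE;
  move: (ricci gt i0 i0 x) (ricci gt i2 i2 x) => r0 r2;
  by field; rewrite ?a0 ?b0.
Qed.

Lemma main : (forall x, U x -> forall i j k l, riem gm i j k l x = 0) ->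
  almost_Einstein U gm /\
  (forall x, U x -> forall a b : 'I_3,
     ricci gt a b x
     = (3 * trace_wrt gm (ricci gt) x + trace_wrt gt (ricci gt) x) / 8 * gm a b x
       + (3 * trace_wrt gt (ricci gt) x + trace_wrt gm (ricci gt) x) / 8 * gt a b x).
Proof.
move=> HR; split.
  exists alp, bet; split; first exact: sm_alp.
  split; first exact: sm_bet.
  by move=> x Ux a b; apply: rho_form => //; apply: HR.
move=> x Ux a b; have Hx := HR x Ux.
rewrite (rho_form a b x Ux Hx) (tr_gm _ x Ux) (tr_gt _ x Ux) (rho_11 x Ux Hx).
have a0 := @A0 x Ux; have b0 := @B0 x Ux.
rewrite /alp /bet.
move: (ricci gt i0 i0 x) (ricci gt i2 i2 x) (gm a b x) (gt a b x) => r0 r2 u v.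
by field; rewrite ?a0 ?b0.
Qed.
End Geo.

Theorem proposition4p5 (R : realType) (U : set (pt R)) (A B : pt R -> R) :
  open U ->
  smooth_on U A -> smooth_on U B ->
  (forall x, U x -> 0 < A x) -> (forall x, U x -> 0 < B x) ->
  (forall x, U x -> forall i j k l : 'I_3, riem (gmet A B) i j k l x = 0) ->
  almost_Einstein U (gmet A B) /\
  (forall x, U x -> forall a b : 'I_3,
     ricci (assoc_metric (gmet A B)) a b x
     = (3 * trace_wrt (gmet A B) (ricci (assoc_metric (gmet A B))) x
          + trace_wrt (assoc_metric (gmet A B)) (ricci (assoc_metric (gmet A B))) x) / 8
         * gmet A B a b x
       + (3 * trace_wrt (assoc_metric (gmet A B)) (ricci (assoc_metric (gmet A B))) x
          + trace_wrt (gmet A B) (ricci (assoc_metric (gmet A B))) x) / 8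
         * assoc_metric (gmet A B) a b x).
Proof.
move=> oU sA sB HA HB HR.
exact: (@main R A B U oU HA HB sA sB HR).
Qed.
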